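(* For all integers $n\ge0$ and $p\ge0$, $$\mathcal{B}_{n,p}=\sum_{k=0}^{n+p}\binom{n+p}{k}\binom{n+p}{p}^{-1}\phi_{n+p-k}\,B_k^{(p)}-\sum_{k=1}^{p}\binom{n+k}{k}^{-1}\binom{p}{k}B_{n+k}^{(k)}.$$
   Context: $\phi_m$ denotes the $m$-th Bell number. The generalized Bernoulli numbers $B_m^{(\alpha)}$ are defined by $\left(\frac{t}{e^t-1}\right)^\alpha=\sum_{m\ge0}B_m^{(\alpha)}\frac{t^m}{m!}$. For an integer $p\ge0$, the $p$-Bell numbers $\mathcal{B}_{n,p}$ are defined by $\sum_{n\ge0}\mathcal{B}_{n,p}\frac{z^n}{n!}=\sum_{n\ge0}\binom{n+p}{p}^{-1}\frac{(e^z-1)^n}{n!}$. *)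

(* Defs.v *)
From mathcomp Require Import all_boot all_order all_algebra.
Set Implicit Arguments. Unset Strict Implicit. Unset Printing Implicit Defensive.
Import Order.TTheory GRing.Theory Num.Theory.
Local Open Scope ring_scope.

Definition fps := nat -> rat.

Definition fone : fps := fun n => (n == 0%N)%:R.

Definition fmul (f g : fps) : fps :=
  fun n => \sum_(i < n.+1) f i * g (n - i)%N.

Definition fpow (f : fps) (k : nat) : fps := iter k (fmul f) fone.

Fixpoint finv_aux (f : fps) (n : nat) : seq rat :=
  match n with
  | 0 => [:: (f 0%N)^-1]
  | n'.+1 =>
      let s := finv_aux f n' in
      rcons s (- (f 0%N)^-1 * \sum_(1 <= i < n'.+2) f i * nth 0 s (n'.+1 - i)%N)
  end.

Definition finv (f : fps) : fps := fun n => nth 0 (finv_aux f n) n.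

Definition fexpm1 : fps := fun n => if n == 0%N then 0 else (n`!%:R)^-1.

Definition fexpm1_div_t : fps := fun n => ((n.+1)`!%:R)^-1.

Definition ftodd : fps := finv fexpm1_div_t.

Definition genBernoulli (alpha m : nat) : rat := m`!%:R * fpow ftodd alpha m.

(* Stirling numbers of the second kind and Bell numbers phi_m. *)
Fixpoint stirling2 (n k : nat) : nat :=
  match n, k with
  | 0, 0 => 1
  | 0, _.+1 => 0
  | _.+1, 0 => 0
  | n'.+1, k'.+1 => (k'.+1 * stirling2 n' k'.+1 + stirling2 n' k')%N
  end.

Definition bell (m : nat) : nat := \sum_(k < m.+1) stirling2 m k.

(* p-Bell numbers: sum_N B_{N,p} z^N/N! = sum_n C(n+p,p)^{-1} (e^z-1)^n/n!.
   Since (e^z-1)^n has order n, only n <= N contribute to the z^N coefficient. *)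
Definition pBell (N p : nat) : rat :=
  N`!%:R * \sum_(n < N.+1) ('C(n + p, p)%:R)^-1 * (n`!%:R)^-1 * fpow fexpm1 n N.

(* Main.v *)
Require Import Defs.
From mathcomp Require Import all_boot all_order all_algebra.
From mathcomp Require Import ring lra zify.
Set Implicit Arguments. Unset Strict Implicit. Unset Printing Implicit Defensive.
Import Order.TTheory GRing.Theory Num.Theory.
Local Open Scope ring_scope.

Definition eqt (M : nat) (p q : {poly rat}) := forall i, (i <= M)%N -> p`_i = q`_i.

Lemma eqt_refl M p : eqt M p p. Proof. by []. Qed.
Lemma eqt_sym M p q : eqt M p q -> eqt M q p. Proof. by move=> h i hi; rewrite h. Qed.
Lemma eqt_trans M p q r : eqt M p q -> eqt M q r -> eqt M p r.
Proof. by move=> h1 h2 i hi; rewrite h1 // h2. Qed.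
Lemma eqt_add M p q r s : eqt M p q -> eqt M r s -> eqt M (p + r) (q + s).
Proof. by move=> h1 h2 i hi; rewrite !coefD h1 // h2. Qed.
Lemma eqt_mul M p q r s : eqt M p q -> eqt M r s -> eqt M (p * r) (q * s).
Proof.
move=> h1 h2 i hi; rewrite !coefM; apply: eq_bigr => j _.
have hj : (j <= M)%N by have := ltn_ord j; lia.
have hj' : (i - j <= M)%N by lia.
by rewrite h1 // h2.
Qed.
Lemma eqt_exp M p q k : eqt M p q -> eqt M (p ^+ k) (q ^+ k).
Proof.
move=> h; elim: k => [|k IH]; first exact: eqt_refl.
by rewrite !exprS; apply: eqt_mul.
Qed.

Definition P (M : nat) (f : fps) : {poly rat} := \poly_(i < M.+1) f i.

Lemma coefP M f i : (i <= M)%N -> (P M f)`_i = f i.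
Proof. by move=> h; rewrite coef_poly ltnS h. Qed.

Lemma fpowP M f k m : (m <= M)%N -> fpow f k m = ((P M f) ^+ k)`_m.
Proof.
elim: k m => [|k IH] m hm.
  by rewrite expr0 coef1.
change (fmul f (fpow f k) m = ((P M f) ^+ k.+1)`_m).
rewrite exprS coefM /fmul.
apply: eq_bigr => j _.
have hj : (j <= M)%N by have := ltn_ord j; lia.
by rewrite coefP // IH //; lia.
Qed.

Lemma size_finv_aux f m : size (finv_aux f m) = m.+1.
Proof. by elim: m => //= m IH; rewrite size_rcons IH. Qed.

Lemma nth_finv_aux f m i : (i <= m)%N -> nth 0 (finv_aux f m) i = Defs.finv f i.
Proof.
elim: m => [|m IH] hi.
  by have -> : i = 0%N by lia.
rewrite /= nth_rcons size_finv_aux.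
case: ltnP => h1.
  by apply: IH; lia.
have -> : i = m.+1 by lia.
by rewrite eqxx /Defs.finv /= nth_rcons size_finv_aux ltnn eqxx.
Qed.

Lemma finv_rec f m : Defs.finv f m.+1 =
  - (f 0%N)^-1 * \sum_(1 <= i < m.+2) f i * Defs.finv f (m.+1 - i)%N.
Proof.
rewrite {1}/Defs.finv /= nth_rcons size_finv_aux ltnn eqxx.
congr (_ * _); rewrite big_nat [RHS]big_nat; apply: eq_bigr => i /andP [h1 h2].
by rewrite nth_finv_aux //; lia.
Qed.

Lemma finv_correct f m : f 0%N != 0 -> fmul f (Defs.finv f) m = fone m.
Proof.
move=> f0; rewrite /fmul /fone; case: m => [|m].
  by rewrite big_ord1 subnn /Defs.finv /= divff.
rewrite big_ord_recl /= subn0 finv_rec.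
rewrite mulrA mulrN mulfV // mulN1r.
rewrite big_add1 /= big_mkord.
by rewrite addNr.
Qed.

Lemma fact_neq0 k : (k`!%:R : rat) != 0.
Proof. by rewrite pnatr_eq0 -lt0n fact_gt0. Qed.

Lemma stirling_big m j : (m < j)%N -> stirling2 m j = 0%N.
Proof.
elim: m j => [|m IH] [|j] //= h.
by rewrite !IH //; lia.
Qed.

Lemma derivX_eqt m : eqt m (P m.+1 fexpm1)^`() (1 + P m.+1 fexpm1).
Proof.
move=> i hi; rewrite coef_deriv coefD coef1 !coefP //; last by lia.
rewrite /fexpm1 /=; case: i hi => [|i] hi /=.
  by rewrite mulr1n.
rewrite add0r (factS i.+1) natrM -mulr_natr.
field; rewrite fact_neq0 /=.
have h : (0 : rat) <= i%:R by rewrite ler0n.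
by apply/eqP; lra.
Qed.

Lemma stir_rec m j : (m.+1)%:R * fpow fexpm1 j.+1 m.+1
  = (j.+1)%:R * (fpow fexpm1 j m + fpow fexpm1 j.+1 m).
Proof.
rewrite !(@fpowP m.+1) //.
set X := P m.+1 fexpm1.
have -> : (m.+1)%:R * (X ^+ j.+1)`_m.+1 = ((X ^+ j.+1)^`())`_m.
  by rewrite coef_deriv mulr_natl.
rewrite deriv_exp /= coefMn.
rewrite (eqt_mul (@derivX_eqt m) (@eqt_refl m (X ^+ j)) (leqnn m)).
by rewrite mulrDl mul1r coefD -exprS mulr_natl.
Qed.

Lemma stirling_fpow m j :
  m`!%:R * fpow fexpm1 j m = j`!%:R * (stirling2 m j)%:R :> rat.
Proof.
elim: m j => [|m IH] [|j].
- by rewrite /= /fone /= mulr1.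
- by rewrite /= /fmul big_ord1 /fexpm1 /= !mul0r !mulr0.
- change ((m.+1)`!%:R * fone m.+1 = 0`!%:R * (stirling2 m.+1 0)%:R :> rat).
  by rewrite /fone /= !mulr0.
- rewrite factS natrM.
  transitivity (m`!%:R * ((m.+1)%:R * fpow fexpm1 j.+1 m.+1) : rat); first by ring.
  rewrite stir_rec mulrCA mulrDr !IH /=.
  rewrite (factS j) !natrD !natrM; ring.
Qed.

Section Main.
Variable M : nat.
Let X := P M fexpm1.
Let D := P M fexpm1_div_t.
Let T := P M ftodd.

Lemma XD : eqt M X ('X * D).
Proof.
move=> i hi; rewrite coefXM /X coefP //; case: i hi => [|i] hi //=.
by rewrite /D coefP //; lia.
Qed.

Lemma TD : eqt M (T * D) 1.
Proof.
move=> i hi; rewrite mulrC coefM coef1.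
have := @finv_correct fexpm1_div_t i.
rewrite /fone => <-; last by rewrite /fexpm1_div_t /=.
rewrite /fmul.
apply: eq_bigr => j _.
have hj : (j <= M)%N by have := ltn_ord j; lia.
by rewrite /D /T !coefP //; lia.
Qed.

Lemma TX k : eqt M (T ^+ k * X ^+ k) ('X ^+ k).
Proof.
apply: eqt_trans (eqt_mul (@eqt_refl M (T ^+ k)) (eqt_exp k XD)) _.
have -> : T ^+ k * ('X * D) ^+ k = 'X ^+ k * (T * D) ^+ k.
  by rewrite !exprMn; ring.
apply: eqt_trans (eqt_mul (@eqt_refl M ('X ^+ k)) (eqt_exp k TD)) _.
by rewrite expr1n mulr1; exact: eqt_refl.
Qed.


Lemma coefE i : (i <= M)%N ->
  (\sum_(m < M.+1) ((m`!%:R)^-1)%:P * X ^+ m)`_i = (i`!%:R)^-1 * (bell i)%:R.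
Proof.
move=> hi; rewrite coef_sum.
transitivity (\sum_(m < M.+1) (i`!%:R)^-1 * (stirling2 i m)%:R : rat).
  apply: eq_bigr => m _; rewrite coefCM -fpowP //.
  have h := stirling_fpow i m.
  apply: (mulfI (fact_neq0 i)); rewrite mulrCA h; field.
  by rewrite !fact_neq0.
rewrite -mulr_sumr /bell natr_sum; congr (_ * _).
rewrite [RHS](big_ord_widen M.+1 (fun m => (stirling2 i m)%:R : rat)); last by lia.
rewrite [RHS]big_mkcond /=; apply: eq_bigr => m _.
case: ifP => // h; rewrite stirling_big //; lia.
Qed.

Lemma key n p : M = (n + p)%N ->
  (\sum_(j < n.+1) (((j + p)`!%:R)^-1)%:P * X ^+ j)`_n =
  \sum_(k < M.+1) (T ^+ p)`_k * ((M - k)`!%:R)^-1 * (bell (M - k))%:R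
  - \sum_(j < p) (j`!%:R)^-1 * (T ^+ (p - j))`_(M - j).
Proof.
move=> hM.
set S := \sum_(j < n.+1) _.
set E := \sum_(m < M.+1) ((m`!%:R)^-1)%:P * X ^+ m.
have h1 : (T ^+ p * E)`_M = \sum_(k < M.+1) (T ^+ p)`_k * ((M - k)`!%:R)^-1 * (bell (M - k))%:R.
  rewrite coefM; apply: eq_bigr => k _; rewrite coefE; first by rewrite mulrA.
  by lia.
have h2 : E = \sum_(m < p) ((m`!%:R)^-1)%:P * X ^+ m + X ^+ p * S.
  rewrite /E -(big_mkord xpredT (fun m => ((m`!%:R)^-1)%:P * X ^+ m)).
  have hp : (p <= M.+1)%N by lia.
  rewrite (big_cat_nat (leq0n p) hp) /=.
  rewrite big_mkord; congr (_ + _).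
  rewrite -{1}(add0n p) big_addn hM.
  have -> : ((n + p).+1 - p = n.+1)%N by lia.
  rewrite big_mkord /S mulr_sumr; apply: eq_bigr => j _.
  by rewrite exprD; ring.
have h3 : (T ^+ p * (X ^+ p * S))`_M = S`_n.
  rewrite mulrA (eqt_mul (TX p) (@eqt_refl M S) (leqnn M)) coefXnM.
  have -> : (M < p)%N = false by lia.
  by have -> : (M - p = n)%N by lia.
have h4 : forall m, (m < p)%N -> (T ^+ p * X ^+ m)`_M = (T ^+ (p - m))`_(M - m).
  move=> m hm.
  have -> : T ^+ p * X ^+ m = T ^+ (p - m) * (T ^+ m * X ^+ m).
    by rewrite mulrA -exprD subnK //; lia.
  rewrite (eqt_mul (@eqt_refl M (T ^+ (p - m))) (TX m) (leqnn M)) coefMXn.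
  by have -> : (M < m)%N = false by lia.
have h5 : (T ^+ p * \sum_(m < p) ((m`!%:R)^-1)%:P * X ^+ m)`_M =
    \sum_(j < p) (j`!%:R)^-1 * (T ^+ (p - j))`_(M - j).
  rewrite mulr_sumr coef_sum; apply: eq_bigr => m _.
  by rewrite mulrCA coefCM h4.
rewrite -h3 -h1 h2 mulrDr coefD h5; ring.
Qed.

End Main.

Lemma binr m k : (k <= m)%N ->
  ('C(m, k)%:R : rat) = m`!%:R / (k`!%:R * (m - k)`!%:R).
Proof.
move=> h; rewrite -(bin_fact h) !natrM; field.
by rewrite !fact_neq0.
Qed.

Theorem mainTheorem18 (n p : nat) :
  pBell n p =
    \sum_(k < (n + p).+1)
       'C(n + p, k)%:R * ('C(n + p, p)%:R)^-1 * (bell (n + p - k))%:R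
         * genBernoulli p k
    - \sum_(1 <= k < p.+1)
       ('C(n + k, k)%:R)^-1 * 'C(p, k)%:R * genBernoulli k (n + k).
Proof.
set M := (n + p)%N.
have hA : pBell n p = n`!%:R * p`!%:R *
   (\sum_(j < n.+1) (((j + p)`!%:R)^-1)%:P * (P M fexpm1) ^+ j)`_n.
  rewrite /pBell coef_sum -[RHS]mulrA; congr (_ * _).
  rewrite mulr_sumr; apply: eq_bigr => j _.
  rewrite coefCM -(@fpowP M) /M; last by lia.
  rewrite (binr (leq_addl j p)) (_ : (j + p - p = j)%N); last by lia.
  field; by rewrite !fact_neq0.
rewrite hA (key (erefl M)) mulrBr; congr (_ - _).
- rewrite mulr_sumr; apply: eq_bigr => k _.
  have hk : (k <= M)%N by have := ltn_ord k; rewrite ltnS.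
  rewrite /genBernoulli (@fpowP M) //.
  rewrite (binr hk) (binr (leq_addl n p)) (_ : (n + p - p = n)%N); last by lia.
  rewrite -/M; field; by rewrite !fact_neq0.
- rewrite big_add1 /= big_nat_rev /= big_mkord mulr_sumr.
  apply: eq_bigr => j _.
  have hj : (j < p)%N := ltn_ord j.
  rewrite add0n (_ : ((p - j.+1).+1 = p - j)%N); last by lia.
  rewrite /genBernoulli (@fpowP M); last by rewrite /M; lia.
  rewrite (binr (leq_addl n (p - j))) (_ : (n + (p - j) - (p - j) = n)%N); last by lia.
  have hpj : (p - j <= p)%N by lia.
  rewrite (binr hpj) (_ : (p - (p - j) = j)%N); last by lia.
  rewrite (_ : (n + (p - j) = M - j)%N); last by rewrite /M; lia.
  field; by rewrite !fact_neq0.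
Qed.
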